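(* For every $\mathcal{ALC}$-formula $\varphi$ and every interpretation $M$, $\mathcal{C}(\varphi,M)\equiv\mathcal{C}_s(\varphi,M)$.
   Context: $\mathcal{ALC}$ concepts: $C::=A\mid\neg C\mid(C\sqcap C)\mid\exists r.C$. $\mathcal{ALC}$-formulae: $\phi::=\alpha\mid\neg\phi\mid(\phi\wedge\phi)$, atomic $\alpha::=C(a)\mid r(a,b)\mid(C=\top)$; $\neg\neg\psi$ identified with $\psi$; $\vee,\bot$ usual abbreviations. A literal is an atomic formula or its negation. Interpretations have a countable nonempty domain with standard semantics; $\equiv$ is logical equivalence (same models). $\mathrm{Sub}(\alpha)=\mathrm{Sub}(\neg\alpha)=\{\alpha,\neg\alpha\}$ for atomic $\alpha$; $\mathrm{Sub}(\psi\wedge\psi')=\mathrm{Sub}(\neg(\psi\wedge\psi'))=\{\psi\wedge\psi',\neg(\psi\wedge\psi')\}\cup\mathrm{Sub}(\psi)\cup\mathrm{Sub}(\psi')$. $\mathrm{con}(\varphi)$: smallest set of concepts containing $C$ whenever $(C=\top)$ or $C(a)$ is in $\mathrm{Sub}(\varphi)$, closed under subconcepts of $\sqcap$ and $\exists r.\cdot$ and under single negation. $\mathrm{ind}(\varphi)$: individual names in $\varphi$. Concept type for $\varphi$: $c\subseteq\mathrm{con}(\varphi)$ with $D\in c$ iff $\neg D\notin c$ and $D\sqcap E\in c$ iff $\{D,E\}\subseteq c$. Formula type for $\varphi$: $f\subseteq\mathrm{Sub}(\varphi)$ with $\psi\in f$ iff $\neg\psi\notin f$ and $\psi\wedge\psi'\in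 f$ iff $\{\psi,\psi'\}\subseteq f$ (for members of $\mathrm{Sub}(\varphi)$). Model candidate $(T,o,f)$: $T$ set of concept types, $o:\mathrm{ind}(\varphi)\to T$, $f$ formula type, $\varphi\in f$, $C(a)\in f\Rightarrow C\in o(a)$, $r(a,b)\in f\Rightarrow\{\neg C\mid\neg\exists r.C\in o(a)\}\subseteq o(b)$. Quasimodel: model candidate where each $\exists r.D\in c\in T$ has $c'\in T$ with $\{D\}\cup\{\neg E\mid\neg\exists r.E\in c\}\subseteq c'$; $\neg C\in c\in T$ implies $(C=\top)\notin f$; $\neg(C=\top)\in f$ implies some $c\in T$ with $C\notin c$; $T\neq\emptyset$. $\mathrm{ftypes}(\varphi)=\{f\mid(T,o,f)$ quasimodel for $\varphi\}$. For interpretation $I$: $\mathrm{qm}(\varphi,I)=(T,o,f)$ with $T=\{c(x)\mid x\in\Delta^I\}$, $c(x)=\{C\in\mathrm{con}(\varphi)\mid x\in C^I\}$, $o(a)=c(a^I)$, $f=\{\psi\in\mathrm{Sub}(\varphi)\mid I\models\psi\}$. $\mathrm{lit}(f)$: literals in $f$. $\mathrm{qfilter}(\varphi,M)=\mathrm{ftypes}(\varphi)\setminus\{f\}$ where $\mathrm{qm}(\varphi,M)=(T,o,f)$. $\mathcal{C}(\varphi,M)=\bigvee_{f\in\mathrm{qfilter}(\varphi,M)}\bigwedge\mathrm{lit}(f)$ if $M\models\varphi$ and $\mathrm{qfilter}(\varphi,M)\ne\emptyset$; $\bot$ if $M\models\varphi$ and $\mathrm{qfilter}(\varphi,M)=\emptyset$;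 $\varphi$ otherwise. $\mathcal{C}_s(\varphi,M)=\varphi\wedge\neg(\bigwedge\mathrm{lit}(f))$ if $M\models\varphi$, where $\mathrm{qm}(\varphi,M)=(T,o,f)$; and $\mathcal{C}_s(\varphi,M)=\varphi$ otherwise. *)

(* Defs.v *)
From Stdlib Require Import List Bool Classical ClassicalEpsilon.
Import ListNotations.

Inductive concept : Type :=
  | CAt  : nat -> concept
  | CNeg : concept -> concept
  | CAnd : concept -> concept -> concept
  | CEx  : nat -> concept -> concept.

Inductive atom : Type :=
  | AConc : concept -> nat -> atom
  | ARole : nat -> nat -> nat -> atom
  | ATop  : concept -> atom.

Inductive formula : Type :=
  | FAt  : atom -> formula
  | FNeg : formula -> formula
  | FAnd : formula -> formula -> formula.

(* Negation modulo the identification ¬¬ψ = ψ *)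
Definition cneg (C : concept) : concept :=
  match C with CNeg D => D | _ => CNeg C end.
Definition fneg (p : formula) : formula :=
  match p with FNeg q => q | _ => FNeg p end.

Fixpoint cnf (C : concept) : concept :=
  match C with
  | CAt A => CAt A
  | CNeg D => cneg (cnf D)
  | CAnd D E => CAnd (cnf D) (cnf E)
  | CEx r D => CEx r (cnf D)
  end.
Definition anf (a : atom) : atom :=
  match a with
  | AConc C x => AConc (cnf C) x
  | ARole r x y => ARole r x y
  | ATop C => ATop (cnf C)
  end.
Fixpoint fnf (p : formula) : formula :=
  match p with
  | FAt a => FAt (anf a)
  | FNeg q => fneg (fnf q)
  | FAnd q r => FAnd (fnf q) (fnf r)
  end.

Definition fbot : formula :=
  FAnd (FAt (ATop (CAt 0))) (FNeg (FAt (ATop (CAt 0)))).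
Definition ftop : formula := FNeg fbot.
Definition FOr (p q : formula) : formula := FNeg (FAnd (FNeg p) (FNeg q)).

Fixpoint bigAnd (l : list formula) : formula :=
  match l with
  | [] => ftop
  | [x] => x
  | x :: l' => FAnd x (bigAnd l')
  end.
Fixpoint bigOr (l : list formula) : formula :=
  match l with
  | [] => fbot
  | [x] => x
  | x :: l' => FOr x (bigOr l')
  end.

Record interp : Type := {
  dom : Type;
  dom_nonempty : inhabited dom;
  dom_countable : exists enc : dom -> nat, forall x y, enc x = enc y -> x = y;
  cint : nat -> dom -> Prop;
  rint : nat -> dom -> dom -> Prop;
  iint : nat -> dom
}.

Fixpoint csem (I : interp) (C : concept) : dom I -> Prop :=
  match C with
  | CAt A => fun x => cint I A x
  | CNeg D => fun x => ~ csem I D x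
  | CAnd D E => fun x => csem I D x /\ csem I E x
  | CEx r D => fun x => exists y, rint I r x y /\ csem I D y
  end.

Definition asem (I : interp) (a : atom) : Prop :=
  match a with
  | AConc C x => csem I C (iint I x)
  | ARole r x y => rint I r (iint I x) (iint I y)
  | ATop C => forall x : dom I, csem I C x
  end.

Fixpoint fsem (I : interp) (p : formula) : Prop :=
  match p with
  | FAt a => asem I a
  | FNeg q => ~ fsem I q
  | FAnd q r => fsem I q /\ fsem I r
  end.

Definition fequiv (p q : formula) : Prop :=
  forall I : interp, fsem I p <-> fsem I q.

(* Sub on formulae (meant to be applied to normal forms, where it agrees
   with the paper's definition; Sub(¬ψ) = Sub(ψ)). *)
Fixpoint Sub (p : formula) : list formula :=
  match p with
  | FAt a => [FAt a; FNeg (FAt a)]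
  | FNeg q => Sub q
  | FAnd q r => [FAnd q r; FNeg (FAnd q r)] ++ Sub q ++ Sub r
  end.

Fixpoint csub (C : concept) : list concept :=
  match C with
  | CAt _ => [C]
  | CNeg D => C :: csub D
  | CAnd D E => C :: csub D ++ csub E
  | CEx _ D => C :: csub D
  end.

Definition atom_concepts (p : formula) : list concept :=
  match p with
  | FAt (AConc C _) => [C]
  | FAt (ATop C) => [C]
  | _ => []
  end.

Definition atom_inds (p : formula) : list nat :=
  match p with
  | FAt (AConc _ a) => [a]
  | FAt (ARole _ a b) => [a; b]
  | _ => []
  end.

(* con(φ): smallest set containing the concepts of atoms of Sub(φ),
   closed under subconcepts and single negation *)
Definition con (phi : formula) : list concept :=
  let L := flat_map csub (flat_map atom_concepts (Sub (fnf phi))) in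
  L ++ map cneg L.

Definition ind (phi : formula) : list nat :=
  flat_map atom_inds (Sub (fnf phi)).

Definition SubN (phi : formula) : list formula := Sub (fnf phi).

Definition is_ctype (phi : formula) (c : concept -> Prop) : Prop :=
  (forall C, c C -> In C (con phi)) /\
  (forall D, In D (con phi) -> (c D <-> ~ c (cneg D))) /\
  (forall D E, In (CAnd D E) (con phi) -> (c (CAnd D E) <-> c D /\ c E)).

Definition is_ftype (phi : formula) (f : list formula) : Prop :=
  incl f (SubN phi) /\
  (forall p, In p (SubN phi) -> (In p f <-> ~ In (fneg p) f)) /\
  (forall p q, In (FAnd p q) (SubN phi) ->
      (In (FAnd p q) f <-> In p f /\ In q f)).

Definition model_candidate (phi : formula) (T : (concept -> Prop) -> Prop)
  (o : nat -> concept -> Prop) (f : list formula) : Prop :=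
  (forall c, T c -> is_ctype phi c) /\
  (forall a, In a (ind phi) -> T (o a)) /\
  is_ftype phi f /\
  In (fnf phi) f /\
  (forall C a, In (FAt (AConc C a)) f -> o a C) /\
  (forall r a b, In (FAt (ARole r a b)) f ->
     forall C, o a (CNeg (CEx r C)) -> o b (cneg C)).

Definition quasimodel (phi : formula) (T : (concept -> Prop) -> Prop)
  (o : nat -> concept -> Prop) (f : list formula) : Prop :=
  model_candidate phi T o f /\
  (forall c r D, T c -> c (CEx r D) ->
     exists c', T c' /\ c' D /\
       (forall E, c (CNeg (CEx r E)) -> c' (cneg E))) /\
  (forall c C, T c -> c (cneg C) -> ~ In (FAt (ATop C)) f) /\
  (forall C, In (FNeg (FAt (ATop C))) f -> exists c, T c /\ ~ c C) /\
  (exists c, T c).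

Definition in_ftypes (phi : formula) (f : list formula) : Prop :=
  exists T o, quasimodel phi T o f.

Definition pdec (P : Prop) : bool :=
  if excluded_middle_informative P then true else false.

Definition qm_f (phi : formula) (M : interp) : list formula :=
  filter (fun p => pdec (fsem M p)) (SubN phi).

Definition is_literal (p : formula) : bool :=
  match p with
  | FAt _ => true
  | FNeg (FAt _) => true
  | _ => false
  end.

Definition lit (f : list formula) : list formula := filter is_literal f.

Definition seteq (f g : list formula) : Prop := forall p, In p f <-> In p g.

Fixpoint sublists {A : Type} (l : list A) : list (list A) :=
  match l with
  | [] => [[]]
  | x :: l' => let s := sublists l' in map (cons x) s ++ s
  end.

(* qfilter(φ, M) = ftypes(φ) \ {f_M}, enumerated as a list (every subset of
   Sub(φ) is represented by some sublist) *)
Definition qfilter (phi : formula) (M : interp) : list (list formula) :=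
  filter (fun f => pdec (in_ftypes phi f /\ ~ seteq f (qm_f phi M)))
         (sublists (SubN phi)).

Definition Cop (phi : formula) (M : interp) : formula :=
  if pdec (fsem M phi) then
    match qfilter phi M with
    | [] => fbot
    | L => bigOr (map (fun f => bigAnd (lit f)) L)
    end
  else phi.

Definition Csop (phi : formula) (M : interp) : formula :=
  if pdec (fsem M phi) then FAnd phi (FNeg (bigAnd (lit (qm_f phi M))))
  else phi.

(* Main.v *)
Require Import Defs.
From Stdlib Require Import List Bool Classical ClassicalEpsilon Setoid.
Import ListNotations.

Lemma pdec_true (P : Prop) : pdec P = true <-> P.
Proof.
  unfold pdec; destruct (excluded_middle_informative P); split; intro H;
  auto; try discriminate; contradiction.
Qed.

Lemma csem_cneg I C x : csem I (cneg C) x <-> ~ csem I C x.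
Proof.
  destruct C; simpl; try tauto.
  all: split; intro H; [intro H'; contradiction | apply NNPP; exact H].
Qed.

Lemma csem_cnf I C : forall x, csem I (cnf C) x <-> csem I C x.
Proof.
  induction C; intro x; simpl.
  - tauto.
  - rewrite csem_cneg, IHC. tauto.
  - rewrite IHC1, IHC2. tauto.
  - split; intros [y [H1 H2]]; exists y; split; auto; apply IHC; auto.
Qed.

Lemma fsem_fneg I p : fsem I (fneg p) <-> ~ fsem I p.
Proof.
  destruct p; simpl; try tauto.
  all: split; intro H; [intro H'; contradiction | apply NNPP; exact H].
Qed.

Lemma fsem_fnf I p : fsem I (fnf p) <-> fsem I p.
Proof.
  induction p; simpl.
  - destruct a; simpl; try tauto.
    + apply csem_cnf.
    + split; intros H x; apply csem_cnf; auto.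
  - rewrite fsem_fneg, IHp. tauto.
  - rewrite IHp1, IHp2. tauto.
Qed.

Fixpoint nodn (p : formula) : Prop :=
  match p with
  | FAt _ => True
  | FNeg q => (match q with FNeg _ => False | _ => True end) /\ nodn q
  | FAnd q r => nodn q /\ nodn r
  end.

Lemma nodn_fneg q : nodn q -> nodn (fneg q).
Proof. destruct q; simpl; tauto. Qed.

Lemma nodn_fnf p : nodn (fnf p).
Proof. induction p; simpl; auto. apply nodn_fneg; auto. Qed.

Lemma self_in q : nodn q -> In q (Sub q).
Proof.
  destruct q as [a|q|q r]; simpl; auto.
  destruct q; simpl; intros [H _]; auto; contradiction.
Qed.

Lemma sub_neg x : forall q, In (FNeg q) (Sub x) -> In q (Sub x).
Proof.
  induction x; simpl; intros q H.
  - destruct H as [H|[H|[]]]; try discriminate. inversion H; auto.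
  - auto.
  - destruct H as [H|[H|H]]; try discriminate.
    + inversion H; subst; auto.
    + right; right. apply in_app_or in H as [H|H]; apply in_or_app; auto.
Qed.

Lemma sub_and x : nodn x -> forall q r, In (FAnd q r) (Sub x) ->
  In q (Sub x) /\ In r (Sub x).
Proof.
  induction x; simpl; intros Hn q r H.
  - destruct H as [H|[H|[]]]; discriminate.
  - apply IHx; tauto.
  - destruct Hn as [Hn1 Hn2].
    destruct H as [H|[H|H]]; try discriminate.
    + inversion H; subst. split; right; right; apply in_or_app;
      [left|right]; apply self_in; auto.
    + apply in_app_or in H as [H|H].
      * destruct (IHx1 Hn1 _ _ H); split; right; right; apply in_or_app; auto.
      * destruct (IHx2 Hn2 _ _ H); split; right; right; apply in_or_app; auto.
Qed.

Lemma sub_negin x : forall p, In p (Sub x) ->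
  match p with FNeg _ => True | _ => In (FNeg p) (Sub x) end.
Proof.
  induction x; simpl; intros p H.
  - destruct H as [H|[H|[]]]; subst; simpl; auto.
  - apply IHx; auto.
  - destruct H as [H|[H|H]]; subst; simpl; auto.
    apply in_app_or in H as [H|H].
    + specialize (IHx1 _ H). destruct p; auto; right; right; apply in_or_app; auto.
    + specialize (IHx2 _ H). destruct p; auto; right; right; apply in_or_app; auto.
Qed.

Lemma sub_fneg x p : In p (Sub x) -> In (fneg p) (Sub x).
Proof.
  intro H. pose proof (sub_negin x p H) as H2.
  destruct p; simpl; auto. apply sub_neg; auto.
Qed.

Lemma lit_in f p : In p (lit f) <-> In p f /\ is_literal p = true.
Proof. unfold lit. apply filter_In. Qed.

Lemma type_truth phi f I :
  is_ftype phi f -> (forall p, In p (lit f) -> fsem I p) ->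
  forall p, In p (SubN phi) -> (In p f <-> fsem I p).
Proof.
  intros [Hincl [Hneg Hand]] Hl.
  induction p; intro Hp.
  - split.
    + intro H; apply Hl; apply lit_in; auto.
    + intro Hs. destruct (classic (In (FAt a) f)) as [H|H]; auto.
      exfalso. assert (H2 : In (fneg (FAt a)) f).
      { apply NNPP. intro H2. apply H. apply Hneg; auto. }
      assert (H3 : fsem I (fneg (FAt a))) by (apply Hl; apply lit_in; auto).
      simpl in H3. auto.
  - assert (Hq : In p (SubN phi)) by (apply sub_neg; auto).
    rewrite (Hneg _ Hp). simpl. rewrite (IHp Hq). tauto.
  - destruct (sub_and _ (nodn_fnf phi) _ _ Hp) as [H1 H2].
    rewrite (Hand _ _ Hp). simpl. rewrite (IHp1 H1), (IHp2 H2). tauto.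
Qed.

Lemma qm_in phi I p : In p (qm_f phi I) <-> In p (SubN phi) /\ fsem I p.
Proof. unfold qm_f. rewrite filter_In, pdec_true. tauto. Qed.

Lemma qm_ftype phi I : is_ftype phi (qm_f phi I).
Proof.
  split; [|split].
  - intros p H. apply qm_in in H. tauto.
  - intros p Hp. rewrite !qm_in, fsem_fneg.
    pose proof (sub_fneg _ _ Hp). tauto.
  - intros p q Hp. rewrite !qm_in.
    destruct (sub_and _ (nodn_fnf phi) _ _ Hp). simpl. tauto.
Qed.

Lemma filter_sublists {A} (h : A -> bool) l : In (filter h l) (sublists l).
Proof.
  induction l; simpl; auto.
  destruct (h a); apply in_or_app; [left; apply in_map | right]; auto.
Qed.

Definition Lc (phi : formula) : list concept :=
  flat_map csub (flat_map atom_concepts (Sub (fnf phi))).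

Lemma con_eq phi : con phi = Lc phi ++ map cneg (Lc phi).
Proof. reflexivity. Qed.

Definition child (E D : concept) : Prop :=
  match D with
  | CAt _ => False
  | CNeg X => E = X
  | CAnd X Y => E = X \/ E = Y
  | CEx _ X => E = X
  end.

Lemma csub_self C : In C (csub C).
Proof. destruct C; simpl; auto. Qed.

Lemma csub_closed C : forall D E, In D (csub C) -> child E D -> In E (csub C).
Proof.
  induction C; simpl; intros D E H Hc.
  - destruct H as [H|[]]; subst; simpl in Hc; contradiction.
  - destruct H as [H|H]; subst; simpl in Hc.
    + subst; right; apply csub_self.
    + right; eapply IHC; eauto.
  - destruct H as [H|H]; subst; simpl in Hc.
    + destruct Hc; subst; right; apply in_or_app; [left|right]; apply csub_self.
    + right; apply in_app_or in H as [H|H]; apply in_or_app; eauto.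
  - destruct H as [H|H]; subst; simpl in Hc.
    + subst; right; apply csub_self.
    + right; eapply IHC; eauto.
Qed.

Lemma Lc_child phi D E : In D (Lc phi) -> child E D -> In E (Lc phi).
Proof.
  unfold Lc. intros H Hc. apply in_flat_map in H as [C [H1 H2]].
  apply in_flat_map. exists C. split; auto. eapply csub_closed; eauto.
Qed.

Lemma Lc_con phi D : In D (Lc phi) -> In D (con phi).
Proof. rewrite con_eq. intro; apply in_or_app; auto. Qed.

Lemma con_child phi D E : In D (con phi) -> child E D -> In E (Lc phi).
Proof.
  rewrite con_eq. intros H Hc. apply in_app_or in H as [H|H].
  - eapply Lc_child; eauto.
  - apply in_map_iff in H as [D0 [<- H0]].
    destruct D0; simpl in Hc |- *; try (subst; auto; fail).
    eapply Lc_child; [|exact Hc]. eapply Lc_child; [exact H0|]. simpl; auto.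
Qed.

Lemma con_cneg phi D : In D (con phi) -> In (cneg D) (con phi).
Proof.
  intro H. pose proof H as H'. rewrite con_eq in H. apply in_app_or in H as [H|H].
  - rewrite con_eq. apply in_or_app; right; apply in_map; auto.
  - apply in_map_iff in H as [D0 [<- H0]]. apply Lc_con.
    destruct D0; simpl; auto.
    destruct D0; simpl; auto.
    eapply Lc_child; [eapply Lc_child; [exact H0|simpl; reflexivity]|simpl; reflexivity].
Qed.

Lemma atom_Lc phi C a : In (FAt (AConc C a)) (SubN phi) -> In C (Lc phi).
Proof.
  intro H. unfold Lc. apply in_flat_map. exists C. split; [|apply csub_self].
  apply in_flat_map. exists (FAt (AConc C a)). simpl; auto.
Qed.

Lemma qm_in_ftypes phi I : fsem I phi -> in_ftypes phi (qm_f phi I).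
Proof.
  intro Hphi.
  set (ct := fun (x : dom I) (C : concept) => In C (con phi) /\ csem I C x).
  exists (fun c => exists x, c = ct x), (fun a => ct (iint I a)).
  refine (conj (conj _ (conj _ (conj _ (conj _ (conj _ _))))) (conj _ (conj _ (conj _ _)))).
  - intros c [x ->]. split; [|split].
    + intros C [H _]; exact H.
    + intros D HD; unfold ct. rewrite csem_cneg. pose proof (con_cneg _ _ HD).
      destruct (classic (csem I D x)); tauto.
    + intros D E HDE; unfold ct; simpl.
      assert (In D (con phi)) by (apply Lc_con; eapply con_child; [exact HDE|simpl; auto]).
      assert (In E (con phi)) by (apply Lc_con; eapply con_child; [exact HDE|simpl; auto]).
      tauto.
  - intros a _. exists (iint I a); reflexivity.
  - apply qm_ftype.
  - apply qm_in. split; [apply self_in, nodn_fnf | apply fsem_fnf; auto].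
  - intros C a H. apply qm_in in H as [Hs Hf]. split; [apply Lc_con; eapply atom_Lc; eauto | exact Hf].
  - intros r a b H C [Hin Hs]. apply qm_in in H as [_ Hr]. simpl in Hr, Hs.
    split.
    + apply con_cneg, Lc_con. eapply Lc_child; [eapply con_child; [exact Hin|simpl; reflexivity]|simpl; reflexivity].
    + rewrite csem_cneg. intro HC. apply Hs. exists (iint I b). auto.
  - intros c r D [x ->] [Hin [y [Hr Hy]]]. exists (ct y). split; [exists y; reflexivity|].
    split.
    + split; [apply Lc_con; eapply con_child; [exact Hin|simpl; reflexivity]|exact Hy].
    + intros E [HinE HsE]. split.
      * apply con_cneg, Lc_con. eapply Lc_child; [eapply con_child; [exact HinE|simpl; reflexivity]|simpl; reflexivity].
      * rewrite csem_cneg. intro HE. apply HsE. exists y; auto.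
  - intros c C [x ->] [_ Hs] Hin. apply qm_in in Hin as [_ Ht]. simpl in Ht.
    rewrite csem_cneg in Hs. apply Hs, Ht.
  - intros C H. apply qm_in in H as [_ Hf]. simpl in Hf.
    apply not_all_ex_not in Hf as [x Hx]. exists (ct x). split; [exists x; reflexivity|].
    intros [_ Hc]; auto.
  - destruct (dom_nonempty I) as [x]. exists (ct x), x; reflexivity.
Qed.

Lemma bigAnd_cons I a l : fsem I (bigAnd (a :: l)) <-> fsem I a /\ fsem I (bigAnd l).
Proof. destruct l; simpl; tauto. Qed.

Lemma bigAnd_sem I l : fsem I (bigAnd l) <-> forall p, In p l -> fsem I p.
Proof.
  induction l.
  - simpl. split; [intros _ p []| tauto].
  - rewrite bigAnd_cons, IHl. split.
    + intros [H1 H2] p [->|Hp]; auto.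
    + intro H; split; [apply H; left; auto| intros; apply H; right; auto].
Qed.

Lemma bigOr_cons I a l : fsem I (bigOr (a :: l)) <-> fsem I a \/ fsem I (bigOr l).
Proof.
  destruct l; simpl; [tauto|].
  destruct (classic (fsem I a)); [tauto|].
  split; [intro H0; right; apply NNPP; tauto | tauto].
Qed.

Lemma bigOr_sem I l : fsem I (bigOr l) <-> exists p, In p l /\ fsem I p.
Proof.
  induction l.
  - simpl. split; [tauto| intros [p [[] _]]].
  - rewrite bigOr_cons, IHl. split.
    + intros [H|[p [Hp H]]]; [exists a; split; simpl; auto| exists p; split; simpl; auto].
    + intros [p [[->|Hp] H]]; [left; auto| right; exists p; auto].
Qed.

Lemma Cop_sem phi M I : fsem M phi ->
  (fsem I (Cop phi M) <->
   exists f, In f (qfilter phi M) /\ (forall p, In p (lit f) -> fsem I p)).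
Proof.
  intro HM. unfold Cop. rewrite (proj2 (pdec_true _) HM).
  destruct (qfilter phi M) as [|f0 L].
  - simpl. split; [tauto| intros [f [[] _]]].
  - rewrite bigOr_sem. split.
    + intros [p [Hp Hs]]. apply in_map_iff in Hp as [f [<- Hf]].
      exists f; split; auto. apply bigAnd_sem; auto.
    + intros [f [Hf Hs]]. exists (bigAnd (lit f)). split.
      * apply in_map_iff. exists f; auto.
      * apply bigAnd_sem; auto.
Qed.

Theorem mainTheorem4 : forall (phi : formula) (M : interp),
  fequiv (Cop phi M) (Csop phi M).
Proof.
  intros phi M I.
  destruct (classic (fsem M phi)) as [HM|HM].
  2:{ unfold Cop, Csop. destruct (pdec (fsem M phi)) eqn:E; [|tauto].
      exfalso; apply HM; apply pdec_true; exact E. }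
  rewrite (Cop_sem phi M I HM).
  unfold Csop. rewrite (proj2 (pdec_true _) HM). simpl.
  split.
  - intros [f [Hf Hl]]. unfold qfilter in Hf.
    apply filter_In in Hf as [_ Hf]. apply pdec_true in Hf as [[T [o Hq]] Hne].
    destruct Hq as [[_ [_ [Hft [Hphi _]]]] _].
    pose proof (type_truth _ _ _ Hft Hl) as E1.
    split.
    + apply fsem_fnf. apply E1; auto. apply self_in, nodn_fnf.
    + intro Hb. rewrite bigAnd_sem in Hb.
      pose proof (type_truth _ _ _ (qm_ftype phi M) Hb) as E2.
      apply Hne. intro p. split; intro Hp.
      * assert (HS : In p (SubN phi)) by (destruct Hft as [Hi _]; apply Hi; auto).
        apply E2; auto. apply E1; auto.
      * assert (HS : In p (SubN phi)) by (apply qm_in in Hp; tauto).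
        apply E1; auto. apply E2; auto.
  - intros [Hphi Hnot]. exists (qm_f phi I). split.
    + unfold qfilter. apply filter_In. split; [apply filter_sublists|].
      apply pdec_true. split; [apply qm_in_ftypes; auto|].
      intro Heq. apply Hnot. apply bigAnd_sem. intros p Hp.
      apply lit_in in Hp as [Hp _]. apply (proj2 (Heq p)) in Hp.
      apply qm_in in Hp; tauto.
    + intros p Hp. apply lit_in in Hp as [Hp _]. apply qm_in in Hp; tauto.
Qed.
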